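(* Consider the model below with $M=M_f=N=1$ and $\epsilon_2\ge0$, and fix all parameters other than $\epsilon_1$. (i) There exists $\bar{\epsilon}_{RPE}\in[-\infty,\infty)$, depending only on the model parameters, such that for every $\epsilon_1\in\mathbb{R}$ a restricted perceptions equilibrium (RPE) exists if and only if $\epsilon_1\ge\bar{\epsilon}_{RPE}$; moreover $\bar{\epsilon}_{RPE}=-\infty$ if $q=1$. (ii) Let $\bar{\epsilon}_{REE}\in[-\infty,\infty)$ be the number such that a rational expectations equilibrium (REE) exists if and only if $\epsilon_1\ge\bar{\epsilon}_{REE}$. Then $\bar{\epsilon}_{REE}\ge\bar{\epsilon}_{RPE}$ if and only if $p+q\ge1$.
   Context: Parameters: $0<\beta<1$, $\sigma,\lambda,\mu>0$, $\psi>1$, $p,q\in(0,1]$ with $(p,q)\neq(1,1)$. The shock $\epsilon_t$ is a two-state Markov chain on $\{\epsilon_1,\epsilon_2\}$ with $\Pr(\epsilon_{t+1}=\epsilon_1\mid\epsilon_t=\epsilon_1)=p$, $\Pr(\epsilon_{t+1}=\epsilon_2\mid\epsilon_t=\epsilon_2)=q$; $\bar q:=(1-p)/(2-p-q)$ is the stationary probability of state 2. Model: $x_t=\hat E_t x_{t+1}-\sigma(i_t-\hat E_t\pi_{t+1})+\epsilon_t$, $\pi_t=\lambda x_t+\beta\hat E_t\pi_{t+1}$, $i_t=\max\{\psi\pi_t,-\mu\}$. For vectors $Y_j=(x_j,\pi_j)$, $j=1,2$, and forecasts $Y^e_j=(x^e_j,\pi^e_j)$, say $(Y_1,Y_2)$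 solves the model given $(Y^e_1,Y^e_2)$ if for $j=1,2$, with $i_j=\max\{\psi\pi_j,-\mu\}$, $x_j=x^e_j-\sigma(i_j-\pi^e_j)+\epsilon_j$ and $\pi_j=\lambda x_j+\beta\pi^e_j$. An REE is $(Y_1,Y_2)$ solving the model given $Y^e_1=pY_1+(1-p)Y_2$, $Y^e_2=(1-q)Y_1+qY_2$. An RPE is $(Y_1,Y_2)$ solving the model given $Y^e_1=Y^e_2=\bar Y:=\bar qY_2+(1-\bar q)Y_1$ (agents forecast with the unconditional mean, and the forecast equals the actual unconditional mean). *)

(* Defs.v *)
From Stdlib Require Import Reals.
Open Scope R_scope.

Definition solves (beta sigma lambda mu psi e x pi xe pie : R) : Prop :=
  let i := Rmax (psi * pi) (- mu) in
  x = xe - sigma * (i - pie) + e /\ pi = lambda * x + beta * pie.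

Definition REE_exists (beta sigma lambda mu psi p q e1 e2 : R) : Prop :=
  exists x1 pi1 x2 pi2 : R,
    solves beta sigma lambda mu psi e1 x1 pi1
      (p * x1 + (1 - p) * x2) (p * pi1 + (1 - p) * pi2) /\
    solves beta sigma lambda mu psi e2 x2 pi2
      ((1 - q) * x1 + q * x2) ((1 - q) * pi1 + q * pi2).

(* stationary probability of state 2 *)
Definition qbar (p q : R) : R := (1 - p) / (2 - p - q).

(* An RPE exists: both states use the unconditional mean as forecast. *)
Definition RPE_exists (beta sigma lambda mu psi p q e1 e2 : R) : Prop :=
  exists x1 pi1 x2 pi2 : R,
    let xb := qbar p q * x2 + (1 - qbar p q) * x1 in
    let pib := qbar p q * pi2 + (1 - qbar p q) * pi1 in
    solves beta sigma lambda mu psi e1 x1 pi1 xb pib /\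
    solves beta sigma lambda mu psi e2 x2 pi2 xb pib.

(* Thresholds in [-oo, oo): None = -oo, Some a = a. *)
Definition above_thr (t : option R) (e : R) : Prop :=
  match t with None => True | Some a => a <= e end.

Definition ext_le (s t : option R) : Prop :=
  match s, t with
  | None, _ => True
  | Some _, None => False
  | Some a, Some b => a <= b
  end.

(* Main.v *)
Require Import Defs.
From Stdlib Require Import Reals Lra Psatz.
Open Scope R_scope.

Definition ell (D u : R) : R := u + (D - 1) * Rmax u 0.

Definition Sys (D A k12 k21 E F u1 u2 : R) : Prop :=
  ell D u1 - (A - k12) * u1 - k12 * u2 = E /\
  ell D u2 - k21 * u1 - (A - k21) * u2 = F.

Definition V1 (D A F k12 k21 : R) : R := - k12 * F / (D - A + k21).
Definition V2 (A F k12 k21 : R) : R := - (1 - A + k12) * F / k21.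

Lemma div_le_l (x y z : R) : 0 < z -> x <= y * z -> x / z <= y.
Proof.
  intros Hz H. replace y with ((y * z) / z) by (field; lra).
  unfold Rdiv. apply Rmult_le_compat_r; [left; apply Rinv_0_lt_compat; lra | lra].
Qed.

Lemma nec (D A k12 k21 E F u1 u2 : R) :
  1 < A -> A < D -> 0 <= k12 -> 0 < k21 -> 0 < F ->
  Sys D A k12 k21 E F u1 u2 ->
  V1 D A F k12 k21 <= E \/ V2 A F k12 k21 <= E.
Proof.
  intros HA HD Hk12 Hk21 HF [H1 H2]. unfold V1, V2, ell in *.
  assert (HG : 0 < D - A + k21) by lra.
  destruct (Rle_dec 0 u1) as [Hu1|Hu1]; destruct (Rle_dec 0 u2) as [Hu2|Hu2].
  - rewrite (Rmax_left u1 0) in H1 by lra. rewrite (Rmax_left u2 0) in H2 by lra.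
    left. apply div_le_l; [lra|].
    assert (Hp : 0 <= u1 * ((D - A) * (D - A + k21 + k12))).
    { apply Rmult_le_pos; [lra|]. apply Rmult_le_pos; lra. }
    rewrite <- H1, <- H2. nra.
  - rewrite (Rmax_left u1 0) in H1 by lra. rewrite (Rmax_right u2 0) in H2 by lra.
    left. apply div_le_l; [lra|].
    assert (Hp : 0 <= k12 * F) by nra.
    assert (Hq : 0 <= E) by (rewrite <- H1; nra). nra.
  - rewrite (Rmax_right u1 0) in H1 by lra. rewrite (Rmax_left u2 0) in H2 by lra.
    set (G := D - A + k21) in *.
    set (m := 1 - A + k12).
    assert (Hu1e : u1 = (G * u2 - F) / k21) by (rewrite <- H2; unfold G; field; lra).
    set (th := G * u2 / F).
    assert (Hid : E = (1 - th) * (- m * F / k21) + th * (- k12 * F / G)).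
    { rewrite <- H1. rewrite Hu1e. unfold th, m, G. field. repeat split; lra. }
    assert (Hth0 : 0 <= th).
    { unfold th. unfold Rdiv. apply Rmult_le_pos; [nra|left; apply Rinv_0_lt_compat; lra]. }
    assert (Hth1 : th <= 1).
    { unfold th. apply div_le_l; [lra|]. unfold G. nra. }
    fold m.
    destruct (Rle_dec (- k12 * F / G) (- m * F / k21)).
    + left. rewrite Hid. nra.
    + right. rewrite Hid. nra.
  - rewrite (Rmax_right u1 0) in H1 by lra. rewrite (Rmax_right u2 0) in H2 by lra.
    destruct (Rle_dec (1 - A + k12) 0).
    + left. apply div_le_l; [lra|].
      assert (Hp : 0 <= k12 * F) by nra.
      assert (Hq : 0 <= E) by (rewrite <- H1; nra). nra.
    + right. apply div_le_l; [lra|].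
      assert (Hdet : (1 - A + k12) * (1 - A + k21) - k12 * k21 < 0) by nra.
      assert (Hp : 0 <= ((1 - A + k12) * (1 - A + k21) - k12 * k21) * u2) by nra.
      assert (Hid : E * k21 - (- (1 - A + k12) * F) = ((1 - A + k12) * (1 - A + k21) - k12 * k21) * u2).
      { rewrite <- H1, <- H2. ring. }
      lra.
Qed.

Lemma suff (D A k12 k21 E F : R) :
  1 < A -> A < D -> 0 <= k12 -> 0 < k21 -> 0 < F ->
  V1 D A F k12 k21 <= E \/ V2 A F k12 k21 <= E ->
  exists u1 u2, Sys D A k12 k21 E F u1 u2.
Proof.
  intros HA HD Hk12 Hk21 HF HV. unfold Sys, ell.
  assert (HG : 0 < D - A + k21) by lra.
  destruct (Rle_dec (V1 D A F k12 k21) E) as [H1|H1].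
  - set (u1 := (E - V1 D A F k12 k21) * (D - A + k21) / ((D - A) * (D - A + k21 + k12))).
    set (u2 := (F + k21 * u1) / (D - A + k21)).
    assert (Hu1 : 0 <= u1).
    { unfold u1. unfold Rdiv. apply Rmult_le_pos; [apply Rmult_le_pos; lra|].
      left; apply Rinv_0_lt_compat. apply Rmult_lt_0_compat; lra. }
    assert (Hu2 : 0 <= u2).
    { unfold u2. unfold Rdiv. apply Rmult_le_pos; [nra|].
      left; apply Rinv_0_lt_compat. lra. }
    exists u1, u2.
    rewrite (Rmax_left u1 0) by lra. rewrite (Rmax_left u2 0) by lra.
    split.
    + unfold u2, u1, V1. field. split; lra.
    + unfold u2. field. lra.
  - destruct HV as [HV|HV]; [lra|].
    set (V1' := V1 D A F k12 k21) in *. set (V2' := V2 A F k12 k21) in *.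
    set (th := (E - V2') / (V1' - V2')).
    assert (Hth0 : 0 <= th).
    { unfold th, Rdiv. apply Rmult_le_pos; [lra|left; apply Rinv_0_lt_compat; lra]. }
    assert (Hth1 : th < 1).
    { unfold th. apply (Rmult_lt_reg_r (V1' - V2')); [lra|].
      unfold Rdiv. rewrite Rmult_assoc, Rinv_l by lra. lra. }
    set (u2 := th * F / (D - A + k21)).
    set (u1 := (th - 1) * F / k21).
    assert (Hu1 : u1 <= 0).
    { unfold u1, Rdiv. assert (0 < / k21) by (apply Rinv_0_lt_compat; lra).
      assert ((th - 1) * F <= 0) by nra. nra. }
    assert (Hu2 : 0 <= u2).
    { unfold u2, Rdiv. apply Rmult_le_pos; [nra|left; apply Rinv_0_lt_compat; lra]. }
    exists u1, u2.
    rewrite (Rmax_right u1 0) by lra. rewrite (Rmax_left u2 0) by lra.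
    split.
    + assert (HE : E = V2' + th * (V1' - V2')) by (unfold th; field; lra).
      rewrite HE. unfold u1, u2, V1', V2', V1, V2. field. split; lra.
    + unfold u1, u2. field. split; lra.
Qed.

Lemma ell_surj (D y : R) : 1 < D -> exists u, ell D u = y.
Proof.
  intros HD. unfold ell. destruct (Rle_dec 0 y).
  - exists (y / D). rewrite Rmax_left.
    + field. lra.
    + unfold Rdiv. apply Rmult_le_pos; [lra|left; apply Rinv_0_lt_compat; lra].
  - exists y. rewrite Rmax_right by lra. ring.
Qed.

Lemma key_max (psi mu c pi : R) : 0 < psi -> mu = -(psi*c) ->
  Rmax (psi*pi) (-mu) = psi*c + psi*Rmax (pi - c) 0.
Proof.
  intros Hpsi Hc. subst mu. unfold Rmax.
  destruct (Rle_dec (psi*pi) (- - (psi*c))), (Rle_dec (pi - c) 0); nra.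
Qed.

Definition Gex (beta sigma lambda mu psi t11 t12 t21 t22 e1 e2 : R) : Prop :=
  exists x1 pi1 x2 pi2 : R,
    solves beta sigma lambda mu psi e1 x1 pi1 (t11*x1 + t12*x2) (t11*pi1 + t12*pi2) /\
    solves beta sigma lambda mu psi e2 x2 pi2 (t21*x1 + t22*x2) (t21*pi1 + t22*pi2).

Lemma trans (beta sigma lambda mu psi t11 t12 t21 t22 e1 e2 : R) :
  0 < lambda -> 0 < sigma -> 0 < psi -> t11 = 1 - t12 -> t22 = 1 - t21 ->
  (Gex beta sigma lambda mu psi t11 t12 t21 t22 e1 e2 <->
   exists u1 u2, Sys (1 + lambda*sigma*psi) (1 + lambda*sigma)
     ((1 + lambda*sigma)*t12 + beta*(t12 - (t11*t12 + t12*t22)))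
     ((1 + lambda*sigma)*t21 + beta*(t21 - (t21*t11 + t22*t21)))
     (lambda*e1 - ((1 + lambda*sigma*psi) - (1 + lambda*sigma))*(-mu/psi))
     (lambda*e2 - ((1 + lambda*sigma*psi) - (1 + lambda*sigma))*(-mu/psi)) u1 u2).
Proof.
  intros Hl Hs Hpsi Ht1 Ht2. subst t11 t22.
  assert (Hmu : mu = -(psi*(-mu/psi))) by (field; lra).
  set (c := -mu/psi) in *. clearbody c.
  unfold Gex, Sys, ell, solves. split.
  - intros [x1 [pi1 [x2 [pi2 [[Ha1 Hb1] [Ha2 Hb2]]]]]].
    rewrite (key_max psi mu c pi1 Hpsi Hmu) in Ha1.
    rewrite (key_max psi mu c pi2 Hpsi Hmu) in Ha2.
    exists (pi1 - c), (pi2 - c).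
    set (R1 := Rmax (pi1 - c) 0) in *. set (R2 := Rmax (pi2 - c) 0) in *.
    clearbody R1 R2.
    pose proof (f_equal (Rmult lambda) Ha1) as Ha1'.
    pose proof (f_equal (Rmult lambda) Ha2) as Ha2'.
    pose proof (f_equal (Rmult t12) Hb1) as Hb1'.
    pose proof (f_equal (Rmult t12) Hb2) as Hb2'.
    pose proof (f_equal (Rmult t21) Hb1) as Hb1''.
    pose proof (f_equal (Rmult t21) Hb2) as Hb2''.
    split; lra.
  - intros [u1 [u2 [H1 H2]]].
    set (pi1 := c + u1). set (pi2 := c + u2).
    set (x1 := (pi1 - beta*((1 - t12)*pi1 + t12*pi2))/lambda).
    set (x2 := (pi2 - beta*(t21*pi1 + (1 - t21)*pi2))/lambda).
    assert (Hx1 : lambda * x1 = pi1 - beta*((1 - t12)*pi1 + t12*pi2)) by (unfold x1; field; lra).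
    assert (Hx2 : lambda * x2 = pi2 - beta*(t21*pi1 + (1 - t21)*pi2)) by (unfold x2; field; lra).
    clearbody x1 x2.
    exists x1, pi1, x2, pi2.
    rewrite (key_max psi mu c pi1 Hpsi Hmu), (key_max psi mu c pi2 Hpsi Hmu).
    replace (pi1 - c) with u1 by (unfold pi1; ring).
    replace (pi2 - c) with u2 by (unfold pi2; ring).
    set (R1 := Rmax u1 0) in *. set (R2 := Rmax u2 0) in *.
    clearbody R1 R2. unfold pi1, pi2 in *. clear pi1 pi2.
    pose proof (f_equal (Rmult t12) Hx1) as Hb1'.
    pose proof (f_equal (Rmult t12) Hx2) as Hb2'.
    pose proof (f_equal (Rmult t21) Hx1) as Hb1''.
    pose proof (f_equal (Rmult t21) Hx2) as Hb2''.
    split; split.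
    + apply (Rmult_eq_reg_l lambda); [|lra]. lra.
    + lra.
    + apply (Rmult_eq_reg_l lambda); [|lra]. lra.
    + lra.
Qed.

Lemma Sys_conv (D A k12 k21 k12' k21' E E' F F' u1 u2 : R) :
  k12 = k12' -> k21 = k21' -> E = E' -> F = F' ->
  Sys D A k12 k21 E F u1 u2 -> Sys D A k12' k21' E' F' u1 u2.
Proof. intros -> -> -> ->. auto. Qed.

Lemma RPE_sys (beta sigma lambda mu psi p q e1 e2 A D C0 : R) :
  0 < lambda -> 0 < sigma -> 0 < psi ->
  A = 1 + lambda*sigma -> D = 1 + lambda*sigma*psi -> C0 = (D - A) * (-mu/psi) ->
  (RPE_exists beta sigma lambda mu psi p q e1 e2 <->
   exists u1 u2, Sys D A (A * qbar p q) (A * (1 - qbar p q)) (lambda*e1 - C0) (lambda*e2 - C0) u1 u2).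
Proof.
  intros Hl Hs Hpsi HA HD HC. set (w := qbar p q).
  assert (HG : RPE_exists beta sigma lambda mu psi p q e1 e2 <->
             Gex beta sigma lambda mu psi (1 - w) w (1 - w) w e1 e2).
  { unfold RPE_exists, Gex. fold w. split; intros [x1 [pi1 [x2 [pi2 H]]]];
      exists x1, pi1, x2, pi2; cbv zeta in *;
      rewrite (Rplus_comm (w * x2)), (Rplus_comm (w * pi2)) in *; exact H. }
  rewrite HG, trans by (auto; ring). subst A D C0.
  split; intros [u1 [u2 H]]; exists u1, u2; revert H; apply Sys_conv; ring.
Qed.

Lemma REE_sys (beta sigma lambda mu psi p q e1 e2 A D C0 : R) :
  0 < lambda -> 0 < sigma -> 0 < psi ->
  A = 1 + lambda*sigma -> D = 1 + lambda*sigma*psi -> C0 = (D - A) * (-mu/psi) ->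
  (REE_exists beta sigma lambda mu psi p q e1 e2 <->
   exists u1 u2, Sys D A ((1 - p) * (A + beta*(1 - p - q))) ((1 - q) * (A + beta*(1 - p - q)))
                   (lambda*e1 - C0) (lambda*e2 - C0) u1 u2).
Proof.
  intros Hl Hs Hpsi HA HD HC.
  assert (HG : REE_exists beta sigma lambda mu psi p q e1 e2 <->
             Gex beta sigma lambda mu psi p (1 - p) (1 - q) q e1 e2) by (unfold REE_exists, Gex; tauto).
  rewrite HG, trans by (auto; ring). subst A D C0.
  split; intros [u1 [u2 H]]; exists u1, u2; revert H; apply Sys_conv; ring.
Qed.

Lemma incl_ext_le (t1 t2 : option R) :
  (forall e, above_thr t2 e -> above_thr t1 e) -> ext_le t1 t2.
Proof.
  destruct t1 as [a|], t2 as [b|]; simpl; intros H; auto.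
  - apply H. lra.
  - specialize (H (a - 1) I). lra.
Qed.

Lemma ext_le_above (t1 t2 : option R) e :
  ext_le t1 t2 -> above_thr t2 e -> above_thr t1 e.
Proof. destruct t1 as [a|], t2 as [b|]; simpl; intros; auto; try lra; contradiction. Qed.

Lemma Rmin_le_iff (a b e : R) : Rmin a b <= e <-> a <= e \/ b <= e.
Proof. unfold Rmin. destruct (Rle_dec a b); split; intros; try destruct H; lra. Qed.

Lemma le_div_iff (x y l : R) : 0 < l -> (x / l <= y <-> x <= y * l).
Proof.
  intros Hl. split; intros H.
  - apply (Rmult_le_compat_r l) in H; [|lra]. 
    replace (x / l * l) with x in H by (field; lra). exact H.
  - apply div_le_l; auto.
Qed.

Lemma thr_iff (V C0 l e : R) : 0 < l -> (V <= l * e - C0 <-> (V + C0) / l <= e).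
Proof. intros Hl. rewrite le_div_iff by auto. split; intros; nra. Qed.

Lemma cmpV1 (D A F w b : R) : 1 < A -> A < D -> 0 < F -> 0 <= w < 1 -> 0 < b ->
  V1 D A F (w*b) ((1-w)*b) - V1 D A F (A*w) (A*(1-w)) =
  w * F * (A - b) * (D - A) / ((D - A + (1-w)*b) * (D - A + A*(1-w))).
Proof. intros. unfold V1. field. split; nra. Qed.

Lemma cmpV2 (A F w b : R) : 1 < A -> 0 < F -> 0 <= w < 1 -> 0 < b ->
  V2 A F (w*b) ((1-w)*b) - V2 A F (A*w) (A*(1-w)) =
  F * (A - 1) * (A - b) / ((1 - w) * A * b).
Proof. intros. unfold V2. field. repeat split; nra. Qed.

Lemma div_nonneg (x y : R) : 0 <= x -> 0 < y -> 0 <= x / y.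
Proof. intros. unfold Rdiv. apply Rmult_le_pos; [lra|left; apply Rinv_0_lt_compat; lra]. Qed.

Lemma div_neg (x y : R) : x < 0 -> 0 < y -> x / y < 0.
Proof. intros. unfold Rdiv. assert (0 < / y) by (apply Rinv_0_lt_compat; lra). nra. Qed.

Theorem proposition3 (beta sigma lambda mu psi p q e2 : R)
  (Hbeta : 0 < beta < 1) (Hsigma : 0 < sigma) (Hlambda : 0 < lambda)
  (Hmu : 0 < mu) (Hpsi : 1 < psi)
  (Hp : 0 < p <= 1) (Hq : 0 < q <= 1) (Hpq : ~ (p = 1 /\ q = 1))
  (He2 : 0 <= e2) :
  exists tRPE : option R,
    (forall e1 : R,
        RPE_exists beta sigma lambda mu psi p q e1 e2 <-> above_thr tRPE e1) /\
    (q = 1 -> tRPE = None) /\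
    (forall tREE : option R,
        (forall e1 : R,
            REE_exists beta sigma lambda mu psi p q e1 e2 <-> above_thr tREE e1) ->
        (ext_le tRPE tREE <-> 1 <= p + q)).
Proof.
  pose (A := 1 + lambda*sigma). pose (D := 1 + lambda*sigma*psi).
  pose (C0 := (D - A) * (-mu/psi)). pose (F := lambda*e2 - C0).
  pose (w := qbar p q).
  assert (Hpsi0 : 0 < psi) by lra.
  assert (Hls : 0 < lambda*sigma) by (apply Rmult_lt_0_compat; lra).
  assert (HA : 1 < A) by (unfold A; lra).
  assert (HAD : A < D).
  { unfold A, D. assert (0 < lambda*sigma*(psi - 1)) by (apply Rmult_lt_0_compat; lra). nra. }
  assert (Hc : -mu/psi < 0).
  { unfold Rdiv. assert (0 < / psi) by (apply Rinv_0_lt_compat; lra). nra. }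
  assert (HF : 0 < F) by (unfold F, C0; nra).
  assert (Hs : 0 < 2 - p - q).
  { destruct (Req_dec p 1), (Req_dec q 1); [tauto|lra|lra|lra]. }
  assert (Hws : w * (2 - p - q) = 1 - p) by (unfold w, qbar; field; lra).
  assert (Hw0 : 0 <= w) by nra.
  pose proof (fun e1 => RPE_sys beta sigma lambda mu psi p q e1 e2 A D C0
                 Hlambda Hsigma Hpsi0 eq_refl eq_refl eq_refl) as HR.
  pose proof (fun e1 => REE_sys beta sigma lambda mu psi p q e1 e2 A D C0
                 Hlambda Hsigma Hpsi0 eq_refl eq_refl eq_refl) as HE.
  fold F w in HR. fold F in HE.
  destruct (Req_dec q 1) as [Hq1|Hq1].
  -
    assert (Hw1 : w = 1).
    { assert (p <> 1) by (intro; apply Hpq; tauto).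
      unfold w, qbar. rewrite Hq1. field. lra. }
    exists None. split; [|split; [auto|]].
    + intros e1. simpl. split; [auto|intros _]. apply HR.
      set (u2 := F / (D - A)).
      assert (Hu2 : 0 <= u2) by (apply div_nonneg; lra).
      destruct (ell_surj D (lambda*e1 - C0 + A*u2)) as [u1 Hu1]; [lra|].
      exists u1, u2. rewrite Hw1. unfold Sys. split.
      * rewrite Hu1. ring.
      * unfold ell. rewrite Rmax_left by lra. unfold u2. field. lra.
    + intros tREE _. simpl. split; intros; [lra|auto].
  - assert (Hq' : q < 1) by lra.
    assert (Hw1 : w < 1) by nra.
    set (r1 := (V1 D A F (A*w) (A*(1-w)) + C0)/lambda).
    set (r2 := (V2 A F (A*w) (A*(1-w)) + C0)/lambda).
    assert (Hk21 : 0 < A*(1-w)) by nra.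
    assert (Hk12 : 0 <= A*w) by nra.
    assert (HRPE : forall e1, RPE_exists beta sigma lambda mu psi p q e1 e2 <->
                              above_thr (Some (Rmin r1 r2)) e1).
    { intros e1. simpl. rewrite HR, Rmin_le_iff. unfold r1, r2.
      rewrite <- !thr_iff by lra. split.
      - intros [u1 [u2 H]]. eapply nec; eauto.
      - intros H. apply suff; auto. }
    exists (Some (Rmin r1 r2)). split; [exact HRPE|]. split; [intros; lra|].
    intros tREE HREE.
    set (B := A + beta*(1 - p - q)).
    set (b := (2 - p - q) * B).
    assert (HB : 0 < B) by (unfold B; nra).
    assert (Hb : 0 < b) by (unfold b; nra).
    assert (HAb : A - b = (p + q - 1) * (A + beta*(2 - p - q))) by (unfold b, B; ring).
    assert (HE' : forall e1, REE_exists beta sigma lambda mu psi p q e1 e2 <->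
               exists u1 u2, Sys D A (w*b) ((1-w)*b) (lambda*e1 - C0) F u1 u2).
    { intros e1. rewrite HE. fold B.
      assert (E1 : (1 - p) * B = w * b) by (unfold b; rewrite <- Rmult_assoc, Hws; ring).
      assert (E2 : (1 - q) * B = (1 - w) * b).
      { unfold b. replace ((1 - w) * ((2 - p - q) * B)) with (((2-p-q) - w*(2-p-q))*B) by ring.
        rewrite Hws. ring. }
      rewrite E1, E2. tauto. }
    assert (Hwb : 0 <= w * b) by nra.
    assert (Hwb2 : 0 < (1 - w) * b) by nra.
    pose proof (cmpV1 D A F w b HA HAD HF (conj Hw0 Hw1) Hb) as C1.
    pose proof (cmpV2 A F w b HA HF (conj Hw0 Hw1) Hb) as C2.
    assert (HD1 : 0 < (D - A + (1-w)*b) * (D - A + A*(1-w))) by nra.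
    assert (HD2 : 0 < (1 - w) * A * b) by nra.
    destruct (Rle_dec 1 (p + q)) as [Hpq1|Hpq1].
    + split; [intros; lra|intros _].
      apply incl_ext_le. intros e1 He1. apply HRPE. apply HREE, HE' in He1.
      destruct He1 as [u1 [u2 Hsys]].
      assert (HAb0 : 0 <= A - b) by (rewrite HAb; apply Rmult_le_pos; nra).
      apply HR. apply suff; auto.
      destruct (nec D A (w*b) ((1-w)*b) _ F u1 u2 HA HAD Hwb Hwb2 HF Hsys) as [H|H].
      * left. assert (0 <= w * F * (A - b) * (D - A) / ((D - A + (1-w)*b) * (D - A + A*(1-w)))).
        { apply div_nonneg; [|lra]. apply Rmult_le_pos; [|lra]. apply Rmult_le_pos; [|lra]. nra. }
        lra.
      * right. assert (0 <= F * (A - 1) * (A - b) / ((1 - w) * A * b)).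
        { apply div_nonneg; [|lra]. apply Rmult_le_pos; [|lra]. nra. }
        lra.
    + split; [intros Hle; exfalso|intros; lra].
      assert (Hw0' : 0 < w) by nra.
      assert (HAb0 : A - b < 0).
      { rewrite HAb. assert (0 < A + beta*(2-p-q)) by nra. nra. }
      assert (L1 : w * F * (A - b) * (D - A) / ((D - A + (1-w)*b) * (D - A + A*(1-w))) < 0).
      { apply div_neg; [|lra]. assert (0 < w*F) by nra. assert (w*F*(A-b) < 0) by nra. nra. }
      assert (L2 : F * (A - 1) * (A - b) / ((1 - w) * A * b) < 0).
      { apply div_neg; [|lra]. assert (0 < F*(A-1)) by nra. nra. }
      set (V1' := V1 D A F (w*b) ((1-w)*b)) in *.
      set (V2' := V2 A F (w*b) ((1-w)*b)) in *.
      set (m := Rmin V1' V2').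
      set (e1 := (m + C0) / lambda).
      assert (Hm : lambda * e1 - C0 = m) by (unfold e1; field; lra).
      assert (Hree : REE_exists beta sigma lambda mu psi p q e1 e2).
      { apply HE'. rewrite Hm. apply suff; auto.
        unfold m, Rmin, V1', V2'. destruct (Rle_dec _ _); [left|right]; lra. }
      apply HREE in Hree.
      pose proof (ext_le_above _ _ e1 Hle Hree) as Hrpe.
      apply HRPE, HR in Hrpe. destruct Hrpe as [u1 [u2 Hsys]].
      rewrite Hm in Hsys.
      assert (m <= V1') by (unfold m; apply Rmin_l).
      assert (m <= V2') by (unfold m; apply Rmin_r).
      destruct (nec D A (A*w) (A*(1-w)) m F u1 u2 HA HAD Hk12 Hk21 HF Hsys); lra.
Qed.
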